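(* Let $0\le\alpha<1$ and $K_\alpha:=\operatorname{conv}\{\pm(1,\alpha),\pm(0,1)\}\subseteq\mathbb{R}^2$. Then $\mu_2(K_\alpha)=\frac12\max\{1+\alpha,2-\alpha\}$.
   Context: For a closed convex set $K\subseteq\mathbb{R}^2$ with non-empty interior, $\mu_2(K):=\inf\{t\ge0: tK+\mathbb{Z}^2=\mathbb{R}^2\}$ (the second covering minimum, or inhomogeneous minimum). *)

(* Defs.v *)
From mathcomp Require Import all_boot all_order all_algebra.
From mathcomp Require Import classical_sets reals.
Set Implicit Arguments. Unset Strict Implicit. Unset Printing Implicit Defensive.
Import Order.TTheory GRing.Theory Num.Theory.
Local Open Scope ring_scope.
Local Open Scope classical_set_scope.

Definition conv2 {R : realType} (s : seq (R * R)) : set (R * R) :=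
  [set p | exists l : nat -> R,
     (forall i, 0 <= l i) /\ \sum_(i < size s) l i = 1 /\
     p = (\sum_(i < size s) l i * (nth (0,0) s i).1,
          \sum_(i < size s) l i * (nth (0,0) s i).2)].

Definition K_alpha {R : realType} (a : R) : set (R * R) :=
  conv2 [:: (1, a); (-1, -a); (0, 1); (0, -1)].

Definition covers {R : realType} (t : R) (K : set (R * R)) : Prop :=
  forall x : R * R, exists (k1 k2 : int) (y : R * R),
    K y /\ x = (t * y.1 + k1%:~R, t * y.2 + k2%:~R).

Definition mu2 {R : realType} (K : set (R * R)) : R :=
  inf [set t : R | 0 <= t /\ covers t K].

(* Main.v *)
Require Import Defs.
From mathcomp Require Import all_boot all_order all_algebra.
From mathcomp Require Import classical_sets reals.
From mathcomp Require Import ring lra zify.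
Import Order.TTheory GRing.Theory Num.Theory.
Local Open Scope ring_scope.

Lemma sum4 (R : realType) (F : nat -> R) :
  \sum_(i < 4) F i = F 0%N + F 1%N + F 2%N + F 3%N.
Proof. by rewrite !big_ord_recr big_ord0 /= add0r. Qed.

Lemma K_bounds (R : realType) (a : R) (p : R * R) : K_alpha a p ->
  -1 <= (1 + a) * p.1 - p.2 <= 1 /\ -1 <= (1 - a) * p.1 + p.2 <= 1.
Proof.
case=> l [l0 [ls ->]] /=.
set s := [:: _; _; _; _] in ls *.
move: ls; rewrite /= (@sum4 R l) (@sum4 R (fun i => l i * (nth (0,0) s i).1))
  (@sum4 R (fun i => l i * (nth (0,0) s i).2)) /= => ls.
have := l0 0%N; have := l0 1%N; have := l0 2%N; have := l0 3%N.
move=> h3 h2 h1 h0.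
split; apply/andP; split; lra.
Qed.

Lemma int_cases (R : realType) (k : int) :
  (k%:~R <= -1 :> R) \/ k%:~R = 0 :> R \/ k%:~R = 1 :> R \/ (2 <= k%:~R :> R).
Proof.
have : (k <= -1)%R \/ k = 0 \/ k = 1 \/ (2 <= k)%R by lia.
case=> [h|[->|[->|h]]].
- by left; move: h; rewrite -(ler_int R).
- by right; left.
- by right; right; left.
- by right; right; right; move: h; rewrite -(ler_int R).
Qed.

Lemma cov_pt (R : realType) (a t c1 c2 : R) : 0 <= t -> covers t (K_alpha a) ->
  exists k1 k2 : int,
    -t <= (1 + a) * (c1 - k1%:~R) - (c2 - k2%:~R) <= t /\
    -t <= (1 - a) * (c1 - k1%:~R) + (c2 - k2%:~R) <= t.
Proof.
move=> t0 /(_ (c1, c2)) [k1 [k2 [y [Ky [e1 e2]]]]].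
exists k1, k2.
have [/andP[u1 u2] /andP[v1 v2]] := @K_bounds _ _ _ Ky.
have -> : c1 - k1%:~R = t * y.1 by rewrite e1; ring.
have -> : c2 - k2%:~R = t * y.2 by rewrite e2; ring.
split; apply/andP; split; nra.
Qed.

Lemma lb (R : realType) (a t : R) : 0 <= a -> a < 1 -> 0 <= t ->
  covers t (K_alpha a) -> (2 - a) / 2 <= t /\ (1 + a) / 2 <= t.
Proof.
move=> a0 a1 t0 cov; split.
- have [k1 [k2 [/andP[u1 u2] /andP[v1 v2]]]] := @cov_pt _ _ _ (1/2) (1/2) t0 cov.
  have hx : -t <= 1/2 - k1%:~R <= t by apply/andP; split; lra.
  case/andP: hx => x1 x2.
  case: (int_cases R k1) => [h1|[h1|[h1|h1]]]; try lra;
  rewrite h1 in u1 u2 v1 v2;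
  case: (int_cases R k2) => [h2|[h2|[h2|h2]]]; try lra;
  rewrite h2 in u1 u2 v1 v2; lra.
- have [k1 [k2 [/andP[u1 u2] /andP[v1 v2]]]] := @cov_pt _ _ _ (1/2) 0 t0 cov.
  have hx : -t <= 1/2 - k1%:~R <= t by apply/andP; split; lra.
  case/andP: hx => x1 x2.
  case: (int_cases R k1) => [h1|[h1|[h1|h1]]]; try lra;
  rewrite h1 in u1 u2 v1 v2;
  case: (int_cases R k2) => [h2|[h2|[h2|h2]]]; try lra;
  rewrite h2 in u1 u2 v1 v2; lra.
Qed.

Lemma K_mem (R : realType) (a p1 p2 : R) :
  -1 <= (1 + a) * p1 - p2 -> (1 + a) * p1 - p2 <= 1 ->
  -1 <= (1 - a) * p1 + p2 -> (1 - a) * p1 + p2 <= 1 ->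
  K_alpha a (p1, p2).
Proof.
move=> h1 h2 h3 h4.
set al := p1; set be := p2 - a * p1.
have hu : (1 + a) * p1 - p2 = al - be by rewrite /al /be; ring.
have hv : (1 - a) * p1 + p2 = al + be by rewrite /al /be; ring.
rewrite hu hv in h1 h2 h3 h4.
have [nA hA] : exists nA, (nA = al /\ 0 <= al) \/ (nA = - al /\ al < 0).
  case: (lerP 0 al) => h; [by exists al; left | by exists (- al); right].
have [nB hB] : exists nB, (nB = be /\ 0 <= be) \/ (nB = - be /\ be < 0).
  case: (lerP 0 be) => h; [by exists be; left | by exists (- be); right].
have hs : nA + nB <= 1 by case: hA => -[-> ?]; case: hB => -[-> ?]; lra.
have hA0 : 0 <= al + nA /\ 0 <= nA - al by case: hA => -[-> ?]; lra.
have hB0 : 0 <= be + nB /\ 0 <= nB - be by case: hB => -[-> ?]; lra.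
pose r := 1 - nA - nB.
pose lf := fun i => match i with 0%N => (al + nA) / 2 | 1%N => (nA - al) / 2
   | 2%N => (be + nB) / 2 + r / 2 | _ => (nB - be) / 2 + r / 2 end.
exists lf.
split; [|split].
- case=> [|[|[|i]]]; rewrite /lf /r; lra.
- rewrite /= (@sum4 R lf) /lf /r; lra.
- set s := [:: _; _; _; _].
  rewrite /= (@sum4 R (fun i => lf i * (nth (0,0) s i).1))
    (@sum4 R (fun i => lf i * (nth (0,0) s i).2)) /=.
  congr (_, _); rewrite /lf /al /be /r /=; lra.
Qed.

Lemma fin (R : realType) (a m x y : R) (j1 j2 : int) : 0 < m ->
  -m <= (1 + a) * (x - j1%:~R) - (y - j2%:~R) <= m ->
  -m <= (1 - a) * (x - j1%:~R) + (y - j2%:~R) <= m ->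
  exists (k1 k2 : int) (y0 : R * R),
    K_alpha a y0 /\ (x, y) = (m * y0.1 + k1%:~R, m * y0.2 + k2%:~R).
Proof.
move=> m0 /andP[u1 u2] /andP[v1 v2].
exists j1, j2, ((x - j1%:~R) / m, (y - j2%:~R) / m); split.
- set q1 := (x - j1%:~R) / m; set q2 := (y - j2%:~R) / m.
  have e1 : x - j1%:~R = m * q1 by rewrite /q1 mulrC divfK ?gt_eqF.
  have e2 : y - j2%:~R = m * q2 by rewrite /q2 mulrC divfK ?gt_eqF.
  rewrite e1 e2 in u1 u2 v1 v2.
  apply: K_mem; nra.
- by rewrite /= mulrC divfK ?gt_eqF // mulrC divfK ?gt_eqF // !subrK.
Qed.

Lemma cover_m (R : realType) (a m : R) : 0 <= a -> a < 1 ->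
  1 + a <= 2 * m -> 2 - a <= 2 * m -> covers m (K_alpha a).
Proof.
move=> a0 a1 hm1 hm2 [x y].
have m0 : 0 < m by lra.
pose k1 := Num.floor x.
have fx1 : k1%:~R <= x by exact: floor_le.
have fx2 : x < (k1 + 1)%:~R by exact: floorD1_gt.
rewrite intrD in fx2.
pose X := x - k1%:~R.
pose w := y - a * X.
pose k2 := Num.floor w.
have fw1 : k2%:~R <= w by exact: floor_le.
have fw2 : w < (k2 + 1)%:~R by exact: floorD1_gt.
rewrite intrD in fw2.
pose f := w - k2%:~R.
have eY : y - k2%:~R = f + a * X by rewrite /f /w; ring.
have eX1 : x - (k1 + 1)%:~R = X - 1 by rewrite intrD /X; ring.
have eY1 : y - (k2 + 1)%:~R = f + a * X - 1 by rewrite intrD -eY; ring.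
have hX : 0 <= X < 1 by apply/andP; split; rewrite /X; lra.
have hf : 0 <= f < 1 by apply/andP; split; rewrite /f; lra.
case/andP: hX => X0 X1; case/andP: hf => f0 f1.
case: (lerP f (m - X)) => c1.
  apply: (@fin _ _ _ _ _ k1 k2 m0); rewrite -/X eY; apply/andP; split; lra.
case: (lerP (1 - (m - X)) f) => c2.
  apply: (@fin _ _ _ _ _ k1 (k2 + 1) m0); rewrite -/X eY1; apply/andP; split; lra.
apply: (@fin _ _ _ _ _ (k1 + 1) (k2 + 1) m0); rewrite eX1 eY1; apply/andP; split; lra.
Qed.

Theorem lemma16 (R : realType) (a : R) (ha0 : 0 <= a) (ha1 : a < 1) :
  mu2 (K_alpha a) = Num.max (1 + a) (2 - a) / 2.
Proof.
set m := Num.max (1 + a) (2 - a) / 2.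
have [hm1 [hm2 hm3]] : 1 + a <= 2 * m /\ 2 - a <= 2 * m /\
    (2 * m = 1 + a \/ 2 * m = 2 - a).
  rewrite /m maxEle; case: ifP => h.
  - have e : 2 * ((2 - a) / 2) = 2 - a by field.
    rewrite e; lra.
  - have e : 2 * ((1 + a) / 2) = 1 + a by field.
    move/negbT: h; rewrite -ltNge => h.
    rewrite e; lra.
rewrite /mu2.
set S := (X in inf X).
have mS : S m by split; [lra | exact: cover_m].
have lbS : lbound S m.
  move=> t [t0 ct]; have [l1 l2] := @lb _ _ _ ha0 ha1 t0 ct; lra.
apply/eqP; rewrite eq_le; apply/andP; split.
- by apply: ge_inf; [exists m|].
- by apply: lb_le_inf; [exists m|].
Qed.
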